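(* Let $p,q$ be integers with $1+|p|<|q|$ and $\gcd(p,q)=1$. Then for every nonzero integer $m$, neither $\psi_{p,q}^{-1}(\langle m\xi\rangle)$ nor $\psi_{p,q}^{-1}(\langle m\eta\rangle)$ is a regular language. More generally, for any $\zeta\in\mathbb{Z}^2$ and integer $m>1$, if $\psi_{p,q}^{-1}(\langle\zeta\rangle)$ is not regular then $\psi_{p,q}^{-1}(\langle m\zeta\rangle)$ is not regular.
   Context: Let $p,q$ be integers with $1+|p|<|q|$ and $t(x)=x^2+px-q$. For $f,g\in\mathbb{Z}[x]$ write $f\sim g$ if $t$ divides $f-g$; identify $\mathbb{Z}^2$ with the additive group of $\mathbb{Z}[x]/\langle t\rangle$ via $(h_1,h_2)\mapsto[h_1x+h_2]_\sim$, and put $\eta=[x]_\sim$, $\xi=[1]_\sim$. Let $\Sigma_q=\{-(|q|-1),\dots,|q|-1\}$ with the order $-(|q|-1)<\dots<|q|-1$; a string $a_0a_1\dots a_n\in\Sigma_q^*$ represents the polynomial $a_nx^n+\dots+a_1x+a_0$, and two strings are equivalent if their polynomials are $\sim$-equivalent. $\mathrm{Dom}_{p,q}$ is the set of $w\in\Sigma_q^*$ such that no string strictly smaller than $w$ in the length-lexicographic order on $\Sigma_q^*$ is equivalent to $w$, and $\psi_{p,q}:\mathrm{Dom}_{p,q}\to\mathbb{Z}^2$ sends $w$ to the $\sim$-class of the polynomial it represents. *)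

(* Defs.v *)
From HB Require Import structures.
From mathcomp Require Import all_boot all_order all_algebra.
Set Implicit Arguments. Unset Strict Implicit. Unset Printing Implicit Defensive.
Import Order.TTheory GRing.Theory Num.Theory.
Local Open Scope ring_scope.

Definition tpoly (p q : int) : {poly int} := 'X^2 + p%:P * 'X - q%:P.

Definition tequiv (p q : int) (f g : {poly int}) : Prop :=
  exists h : {poly int}, f - g = h * tpoly p q.

Definition inSigma (q : int) (w : seq int) : bool := all (fun a => `|a| < `|q|) w.

(* the string a_0 a_1 ... a_n represents a_n x^n + ... + a_1 x + a_0 *)
Definition polyOf (w : seq int) : {poly int} := Poly w.

Fixpoint lex_lt (u v : seq int) : bool :=
  match u, v with
  | a :: u', b :: v' => (a < b) || ((a == b) && lex_lt u' v')
  | _, _ => false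
  end.

Definition llex_lt (u v : seq int) : bool :=
  (size u < size v)%N || ((size u == size v) && lex_lt u v).

Definition Dom (p q : int) (w : seq int) : Prop :=
  inSigma q w /\
  forall u : seq int, inSigma q u -> llex_lt u w -> ~ tequiv p q (polyOf u) (polyOf w).

(* psi_{p,q}(w) = h, with Z^2 identified with Z[x]/<t> via (h1,h2) |-> [h1 x + h2] *)
Definition psi_is (p q : int) (w : seq int) (h : int * int) : Prop :=
  tequiv p q (polyOf w) (h.1%:P * 'X + h.2%:P).

Definition preimage_cyc (p q : int) (zeta : int * int) (w : seq int) : Prop :=
  Dom p q w /\ exists k : int, psi_is p q w (k * zeta.1, k * zeta.2).

Definition regular (q : int) (L : seq int -> Prop) : Prop :=
  exists (S : finType) (s0 : S) (F : pred S) (d : S -> int -> S),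
    forall w : seq int, L w <-> (inSigma q w /\ F (foldl d s0 w)).

(* Main.v *)
Require Import Defs.
From HB Require Import structures.
From mathcomp Require Import all_boot all_order all_algebra.
From mathcomp Require Import zify ring lra.
From Stdlib Require Import Classical ClassicalEpsilon.
Import Order.TTheory GRing.Theory Num.Theory.
Local Open Scope ring_scope.

Section Alg.
Variables p q : int.

Definition pc (h : int * int) : {poly int} := h.1%:P * 'X + h.2%:P.

Lemma teq_refl f : tequiv p q f f.
Proof. by exists 0; rewrite subrr mul0r. Qed.

Lemma teq_sym f g : tequiv p q f g -> tequiv p q g f.
Proof. by case=> h e; exists (- h); rewrite mulNr -e opprB. Qed.

Lemma teq_trans f g k : tequiv p q f g -> tequiv p q g k -> tequiv p q f k.
Proof. by case=> h1 e1 [h2 e2]; exists (h1 + h2); rewrite mulrDl -e1 -e2; ring. Qed.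

Lemma teq_add f1 g1 f2 g2 : tequiv p q f1 g1 -> tequiv p q f2 g2 ->
  tequiv p q (f1 + f2) (g1 + g2).
Proof. by case=> h1 e1 [h2 e2]; exists (h1 + h2); rewrite mulrDl -e1 -e2; ring. Qed.

Lemma teq_opp f g : tequiv p q f g -> tequiv p q (- f) (- g).
Proof. by case=> h e; exists (- h); rewrite mulNr -e; ring. Qed.

Lemma teq_mull c f g : tequiv p q f g -> tequiv p q (c * f) (c * g).
Proof. by case=> h e; exists (c * h); rewrite -mulrA -e; ring. Qed.

Lemma teq_sub f g : tequiv p q f g <-> tequiv p q (f - g) 0.
Proof.
split=> -[h e]; exists h; first by rewrite subr0.
by rewrite -e subr0.
Qed.

Lemma size_t : size (tpoly p q) = 3%N.
Proof.
rewrite /tpoly -addrA size_polyDl ?size_polyXn //.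
rewrite -polyCN size_MXaddC; case: ifP => // _.
by rewrite ltnS (leq_ltn_trans (size_polyC_leq1 _)).
Qed.

Lemma lead_t : lead_coef (tpoly p q) = 1.
Proof.
rewrite /tpoly -addrA lead_coefDl ?lead_coefXn //.
rewrite size_polyXn -polyCN size_MXaddC; case: ifP => // _.
by rewrite ltnS (leq_ltn_trans (size_polyC_leq1 _)).
Qed.

Lemma size_pc h : (size (pc h) <= 2)%N.
Proof.
rewrite /pc size_MXaddC; case: ifP => // _.
by rewrite ltnS size_polyC_leq1.
Qed.

Lemma pc_sub a b : pc a - pc b = pc (a.1 - b.1, a.2 - b.2).
Proof. rewrite /pc /= !rmorphB /=; ring. Qed.

Lemma pc_eq0 a : pc a = 0 -> a = (0, 0).
Proof.
move=> e; have e0 := congr1 (fun r : {poly int} => r`_0) e.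
have e1 := congr1 (fun r : {poly int} => r`_1) e.
move: e0 e1; rewrite /pc !coefD !coefMX !coefC /=.
by case: a e => a1 a2 _ /=; rewrite add0r addr0 => -> ->.
Qed.

Lemma teq_pc a b : tequiv p q (pc a) (pc b) -> a = b.
Proof.
case=> h; rewrite pc_sub => e.
have : h * tpoly p q + (- pc (a.1 - b.1, a.2 - b.2)) == 0 by rewrite e subrr.
rewrite rreg_div0; last first.
- by rewrite size_opp size_t (leq_ltn_trans (size_pc _)).
- by rewrite lead_t; apply: rreg1.
case/andP=> _; rewrite oppr_eq0 => /eqP /pc_eq0 [].
by case: a b {e} => a1 a2 [b1 b2] /= /eqP; rewrite subr_eq0 => /eqP -> /eqP; rewrite subr_eq0 => /eqP ->.
Qed.

End Alg.
Arguments teq_refl {p q f}.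
Arguments teq_sym {p q f g}.
Arguments teq_trans {p q f g k}.
Arguments teq_add {p q f1 g1 f2 g2}.
Arguments teq_opp {p q f g}.
Arguments teq_mull {p q} c {f g}.
Arguments teq_pc {p q a b}.


Section Co.
Variables p q : int.

Definition xm (c : int * int) : int * int := (c.2 - p * c.1, q * c.1).

Fixpoint co (w : seq int) : int * int :=
  match w with
  | [::] => (0, 0)
  | a :: w' => let c := co w' in (c.2 - p * c.1, a + q * c.1)
  end.

Lemma co_equiv w : tequiv p q (Poly w) (pc (co w)).
Proof.
elim: w => [|a w [h e]] /=; first by exists 0; rewrite /pc /= mul0r; ring.
have -> : Poly w = h * tpoly p q + pc (co w) by rewrite -e; ring.
exists ((co w).1%:P + h * 'X).
rewrite cons_poly_def /pc /tpoly /=.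
rewrite ?rmorphD ?rmorphB ?rmorphM /=; ring.
Qed.

Lemma psi_co w h : psi_is p q w h <-> co w = h.
Proof.
split; rewrite /psi_is.
- move=> e; apply: teq_pc.
  exact: teq_trans (teq_sym (co_equiv w)) e.
- by move=> <-; exact: co_equiv.
Qed.

Lemma equiv_co u w : tequiv p q (Poly u) (Poly w) <-> co u = co w.
Proof.
split.
- move=> e; apply: teq_pc.
  apply: teq_trans (teq_sym (co_equiv u)) _.
  exact: teq_trans e (co_equiv w).
- move=> e; apply: teq_trans (co_equiv u) _; rewrite e; exact: teq_sym (co_equiv w).
Qed.

Lemma Poly_cat (u v : seq int) : Poly (u ++ v) = Poly u + 'X^(size u) * Poly v.
Proof.
elim: u => [|a u IH] /=; first by rewrite add0r expr0 mul1r.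
rewrite !cons_poly_def IH exprS; ring.
Qed.

Lemma co_zeros k : co (nseq k 0) = (0, 0).
Proof. by elim: k => //= k ->; rewrite !mulr0 subrr. Qed.

Lemma co_pad w k : co (w ++ nseq k 0) = co w.
Proof. by elim: w => [|a w /= ->] //=; rewrite co_zeros. Qed.

Definition dif (u w : seq int) := [seq x.1 - x.2 | x <- zip u w].

Lemma co_dif u w : size u = size w ->
  co (dif u w) = ((co u).1 - (co w).1, (co u).2 - (co w).2).
Proof.
elim: u w => [|a u IH] [|b w] //= [] /IH ->.
all: congr pair; rewrite /=; ring.
Qed.

End Co.


Section Rep.
Variables p q : int.
Hypothesis hpq : 1 + `|p| < `|q|.

Lemma split_digit h : exists a s : int, h = a + q * s /\ `|a| < `|q| /\ `|q| * `|s| <= `|h|.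
Proof.
have qn0 : `|q| != 0 by lia.
have key : forall h, 0 <= h -> exists a s : int, h = a + q * s /\ `|a| < `|q| /\ `|q| * `|s| <= `|h|.
  move=> {}h h0.
  have e := divz_eq h `|q|.
  have m0 := modz_ge0 h qn0.
  have m1 := ltz_mod h qn0.
  have d0 : 0 <= (h %/ `|q|)%Z by rewrite divz_ge0 //; lia.
  move: e m0 m1 d0; set s0 := (h %/ `|q|)%Z; set r := (h %% `|q|)%Z => e m0 m1 d0.
  have [qpos|qneg] := lerP 0 q.
  - exists r, s0; rewrite normr_id in m1; nia.
  - exists r, (- s0); rewrite normr_id in m1; nia.
have [h0|h0] := lerP 0 h; first exact: key.
have [a [s [e1 [e2 e3]]]] := key (- h) ltac:(lia).
exists (- a), (- s); nia.
Qed.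

Definition Phi (e : int * int) : int := 2 * `|e.2| + (`|q| - `|p| + 1) * `|e.1|.

Lemma Phi_ge0 e : 0 <= Phi e.
Proof. rewrite /Phi; nia. Qed.

Lemma represent (e : int * int) : exists w, inSigma q w /\ co p q w = e.
Proof.
suff H : forall n : nat, forall e, Phi e <= n%:Z -> exists w, inSigma q w /\ co p q w = e.
  by apply: (H (absz (Phi e))); have := Phi_ge0 e; lia.
elim=> [|n IH] {}e.
- case: e => h1 h2; rewrite /Phi /= => le0.
  have -> : h1 = 0 by nia.
  have -> : h2 = 0 by nia.
  by exists [::].
- case: e => h1 h2 hle.
  have [z|nz] := boolP ((h1 == 0) && (h2 == 0)).
    by case/andP: z => /eqP -> /eqP ->; exists [::].
  have [a [s [e1 [e2 e3]]]] := split_digit h2.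
  have lt : Phi (s, h1 + s * p) < Phi (h1, h2).
    rewrite /Phi /=.
    have t1 : `|h1 + s * p| <= `|h1| + `|s| * `|p| by rewrite -normrM ler_normD.
    have f3 : 3 * `|h1| <= (`|q| - `|p| + 1) * `|h1| by apply: ler_wpM2r => //; lia.
    have [s0|s0] := eqVneq s 0.
      move: t1; rewrite s0 normr0 mul0r addr0 mul0r; move: nz e3; rewrite s0 normr0 mulr0; lia.
    have f4 : `|p| * `|s| <= `|q| * `|s| - 2 * `|s|.
      rewrite -mulrBl; apply: ler_wpM2r => //; lia.
    have : 1 <= `|s| by move: s0; lia.
    lia.
  have [w [sw cw]] := IH (s, h1 + s * p) ltac:(move: lt hle; lia).
  exists (a :: w); split; first by rewrite /inSigma /= e2 /=.
  by rewrite /= cw /= e1; congr pair; ring.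
Qed.

Definition Bz : int := 2 * `|q| - 1.
Fixpoint lv (w : seq int) : int :=
  match w with [::] => 0 | a :: w' => (a + `|q| - 1) * Bz ^+ size w' + lv w' end.

Lemma lv_bound w : inSigma q w -> 0 <= lv w < Bz ^+ size w.
Proof.
elim: w => [|a w IH] /=; first by rewrite expr0.
rewrite /inSigma /= => /andP [ha hw]; have := IH hw.
rewrite exprS /Bz; move: (Bz ^+ size w) => X.
rewrite /Bz in X *; nia.
Qed.

Lemma lv_lex u w : inSigma q u -> inSigma q w -> size u = size w -> lex_lt u w -> lv u < lv w.
Proof.
elim: u w => [|a u IH] [|b w] //=.
rewrite /inSigma /= => /andP [ha hu] /andP [hb hw] [es].
have := lv_bound _ hu; have := lv_bound _ hw.
move=> b1 b2; case/orP.
- move=> ab; move: b1 b2; rewrite es; move: (Bz ^+ size w) => X b1 b2.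
  have : 0 <= (b - a - 1) * X by apply: mulr_ge0; lia.
  lia.
- case/andP => /eqP -> /(IH w hu hw es); rewrite es; lia.
Qed.

Lemma dom_exists w : inSigma q w -> exists w', Dom p q w' /\ co p q w' = co p q w.
Proof.
move: w.
suff H : forall n (k : nat) w, size w = n -> lv w <= k%:Z -> inSigma q w ->
    exists w', Dom p q w' /\ co p q w' = co p q w.
  move=> w sw; apply: (H (size w) (absz (lv w)) w) => //.
  by have := lv_bound _ sw; lia.
elim/ltn_ind => n IHn.
elim=> [|k IHk] w sz hk sw.
all: case: (classic (Dom p q w)) => [d|nd]; first by exists w.
all: have [u [su [lt eq]]] : exists u, inSigma q u /\ llex_lt u w /\ tequiv p q (Poly u) (Poly w).
all: try (apply: NNPP => H; apply: nd; split => // u su lt eq; apply: H; by exists u).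
all: move: lt; rewrite /llex_lt => /orP [lts|/andP [/eqP es lx]].
all: try (have [w' [dw' cw']] := IHn (size u) ltac:(by rewrite -sz) (absz (lv u)) u erefl
         ltac:(by have := lv_bound _ su; lia) su;
         exists w'; split => //; rewrite cw'; exact/(equiv_co p q)).
- have := lv_lex _ _ su sw es lx; have := lv_bound _ su; lia.
- have [w' [dw' cw']] := IHk u ltac:(by rewrite es) ltac:(have := lv_lex _ _ su sw es lx; lia) su.
  exists w'; split => //; rewrite cw'; exact/(equiv_co p q).
Qed.

End Rep.


Lemma pumping (q : int) (L : seq int -> Prop) : regular q L ->
  exists N : nat, forall w, L w -> (N <= size w)%N ->
  exists u y z, (0 < size y)%N /\ L (u ++ z) /\ L (u ++ y ++ z) /\ L (u ++ y ++ y ++ z).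
Proof.
case=> S [s0 [F [d HL]]]; exists #|S| => w Lw sw.
pose f (i : 'I_(#|S|.+1)) := foldl d s0 (take i w).
have : ~ injective f by move/leq_card; rewrite card_ord ltnn.
move=> ninj.
have [i [j [fij nij]]] : exists i j, f i = f j /\ i <> j.
  apply: NNPP => H; apply: ninj => i j fij; apply: NNPP => nij; apply: H; by exists i, j.
wlog lij : i j fij nij / (i < j)%N.
  move=> Hw; have [l|l|l] := ltngtP i j.
  - exact: Hw l.
  - exact: (Hw j i (esym fij) (fun e => nij (esym e)) l).
  - by case: nij; apply: val_inj.
have jw : (j <= size w)%N by apply: leq_trans sw; rewrite -ltnS.
pose u := take i w; pose y := take (j - i) (drop i w); pose z := drop j w.
have ejw : take j w = u ++ y by rewrite /u /y -takeD subnKC // ltnW.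
have ew : w = u ++ y ++ z by rewrite catA -ejw cat_take_drop.
have sy : (0 < size y)%N.
  rewrite /y size_take size_drop; case: ifP => _; lia.
have fy : foldl d (foldl d s0 u) y = foldl d s0 u.
  by rewrite -foldl_cat -ejw; move: fij; rewrite /f.
case: (HL w) => /(_ Lw) [sgw Fw] _.
move: sgw Fw; rewrite ew /inSigma !all_cat !foldl_cat fy => /and3P [s1 s2 s3] Fw.
exists u, y, z; split => //; split; last split.
- by apply/HL; rewrite /inSigma all_cat foldl_cat s1 s3.
- by apply/HL; rewrite /inSigma !all_cat !foldl_cat fy s1 s2 s3.
- by apply/HL; rewrite /inSigma !all_cat !foldl_cat !fy s1 s2 s3.
Qed.

Section Part1.
Variables p q : int.
Hypothesis hpq : 1 + `|p| < `|q|.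
Hypothesis hgcd : gcdz p q = 1.

Definition AB (n : nat) : int * int := iter n (xm p q) (0, 1).

Lemma Xn_equiv n : tequiv p q ('X^n) (pc (AB n)).
Proof.
elim: n => [|n IH]; first by rewrite expr0 /AB /pc /=; apply: teq_sym; exists 0; rewrite mul0r; ring.
rewrite exprS; apply: teq_trans (teq_mull 'X IH) _.
exists (AB n).1%:P; rewrite /AB /= -/(AB n) /pc /tpoly /xm /=.
rewrite ?rmorphD ?rmorphB ?rmorphM /=; ring.
Qed.

Lemma AB_mod n : (0 < n)%N -> exists k, (AB n).1 = (- p) ^+ n.-1 + q * k.
Proof.
elim: n => // n IH _.
case: n IH => [|n] IH; first by exists 0; rewrite /AB /= expr0; ring.
have [k ek] := IH erefl.
exists ((AB n).1 - p * k).
have e2 : AB n.+2 = xm p q (AB n.+1) by [].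
have e1 : (AB n.+1).2 = q * (AB n).1 by [].
rewrite e2 {1}/xm; change ((AB n.+1).2 - p * (AB n.+1).1 = (- p) ^+ n.+1 + q * ((AB n).1 - p * k)).
rewrite e1 ek exprS /=; ring.
Qed.

Lemma AB1_neq0 n : (0 < n)%N -> (AB n).1 != 0.
Proof.
move=> n0; have [k ek] := AB_mod _ n0.
apply/negP => /eqP e0.
have cp : coprimez ((- p) ^+ n.-1) q.
  apply: coprimezXl; rewrite coprimez_sym coprimezN coprimez_sym /coprimez hgcd //.
case/coprimezP: cp => [[a b]] /= eb.
have e : (- p) ^+ n.-1 = - (q * k) by apply/eqP; rewrite -addr_eq0 -ek e0.
rewrite e in eb.
have e2 : q * (b - a * k) = 1 by rewrite -eb; ring.
have := congr1 Num.norm e2; rewrite normrM normr1 => e3.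
have : `|b - a * k| != 0 by apply/eqP => h; move: e3; rewrite h mulr0.
move: e3 hpq; move: (`|b - a * k|) => X; nia.
Qed.

Definition Kb : int := `|q| + `|p| + 1.

Lemma co_bound w : inSigma q w ->
  `|(co p q w).1| < Kb ^+ size w /\ `|(co p q w).2| < Kb ^+ size w.
Proof.
elim: w => [|a w IH] /=; first by rewrite expr0 !normr0.
rewrite /inSigma /= => /andP [ha /IH [b1 b2]].
move: b1 b2; set c := co p q w; move: (c.1) (c.2) => c1 c2.
rewrite exprS; have X1 : 1 <= Kb ^+ size w by apply: exprn_ege1; rewrite /Kb; lia.
move: X1; move: (Kb ^+ size w) => X X1 b1 b2.
have f1 : `|p| * `|c1| <= `|p| * (X - 1) by apply: ler_wpM2l => //; lia.
have f2 : `|q| * `|c1| <= `|q| * (X - 1) by apply: ler_wpM2l => //; lia.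
have t1 : `|c2 - p * c1| <= `|c2| + `|p| * `|c1| by rewrite -normrM; apply: ler_normB.
have t2 : `|a + q * c1| <= `|a| + `|q| * `|c1| by rewrite -normrM; apply: ler_normD.
rewrite /Kb; split; lia.
Qed.

Lemma long_word (z1 z2 : int) : (z1 != 0) || (z2 != 0) ->
  forall N : nat, exists w, preimage_cyc p q (z1, z2) w /\ (N <= size w)%N.
Proof.
move=> nz N.
set k := Kb ^+ N.
have [w [sw cw]] := @represent p q hpq (k * z1, k * z2).
have [w' [dw' cw']] := @dom_exists p q hpq _ sw.
exists w'; split.
  split => //; exists k; apply/psi_co; rewrite cw' cw //.
have sw' : inSigma q w' by case: dw'.
have [b1 b2] := co_bound _ sw'.
rewrite cw' cw /= in b1 b2.
rewrite leqNgt; apply/negP => lt.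
clear cw cw' dw' sw sw'.
have kpos : 1 <= k by apply: exprn_ege1; rewrite /Kb; lia.
have : Kb ^+ size w' <= k by apply: ler_weXn2l; [rewrite /Kb; lia| exact: ltnW].
move: b1 b2; rewrite !normrM (ger0_norm (le_trans ler01 kpos)).
move: kpos nz; move: (Kb ^+ size w') k => X k kpos nz b1 b2 Xk.
case/orP: nz => nz.
- have : 1 <= `|z1| by move: nz; lia.
  nia.
- have : 1 <= `|z2| by move: nz; lia.
  nia.
Qed.

Lemma pump_rel (zeta : int * int) u y z : (0 < size y)%N ->
  preimage_cyc p q zeta (u ++ z) -> preimage_cyc p q zeta (u ++ y ++ z) ->
  preimage_cyc p q zeta (u ++ y ++ y ++ z) ->
  exists d1 d2 : int, d1 != 0 /\
    tequiv p q ('X^(size y) * pc (d1 * zeta.1, d1 * zeta.2)) (pc (d2 * zeta.1, d2 * zeta.2)).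
Proof.
move=> sy [D0 [k0 e0]] [D1 [k1 e1]] [D2 [k2 e2]].
exists (k1 - k0), (k2 - k1); split.
  apply/eqP => h.
  have kk : k1 = k0 by apply/eqP; rewrite -subr_eq0 h.
  case: D1 => _ /(_ (u ++ z)); apply.
  - by case: D0.
  - by rewrite /llex_lt !size_cat; apply/orP; left; lia.
  - apply/equiv_co; move/psi_co: e0 => ->; move/psi_co: e1 => ->; by rewrite kk.
have -> : pc ((k1 - k0) * zeta.1, (k1 - k0) * zeta.2) =
   pc (k1 * zeta.1, k1 * zeta.2) - pc (k0 * zeta.1, k0 * zeta.2).
  by rewrite /pc /= ?rmorphB ?rmorphM /=; ring.
have -> : pc ((k2 - k1) * zeta.1, (k2 - k1) * zeta.2) =
   pc (k2 * zeta.1, k2 * zeta.2) - pc (k1 * zeta.1, k1 * zeta.2).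
  by rewrite /pc /= ?rmorphB ?rmorphM /=; ring.
apply: teq_trans (teq_mull _ (teq_sym (teq_add e1 (teq_opp e0)))) _.
have -> : 'X^(size y) * (polyOf (u ++ y ++ z) - polyOf (u ++ z)) =
          polyOf (u ++ y ++ y ++ z) - polyOf (u ++ y ++ z).
  rewrite /polyOf !Poly_cat; ring.
exact: teq_add e2 (teq_opp e1).
Qed.

Lemma part1 (m : int) : m != 0 ->
  ~ regular q (preimage_cyc p q (0, m)) /\ ~ regular q (preimage_cyc p q (m, 0)).
Proof.
move=> m0; split => /pumping [N HN].
- have [w [Lw sw]] := long_word 0 m ltac:(by rewrite m0 orbT) N.
  have [u [y [z [sy [L0 [L1 L2]]]]]] := HN w Lw sw.
  have [d1 [d2 [nd1 e]]] := pump_rel _ _ _ _ sy L0 L1 L2.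
  move: e; rewrite /= !mulr0.
  have -> : 'X^(size y) * pc (0, d1 * m) = (d1 * m)%:P * 'X^(size y).
    by rewrite /pc /= mulrC; ring.
  move=> e; have := teq_trans (teq_sym (teq_mull (d1 * m)%:P (Xn_equiv (size y)))) e.
  have -> : (d1 * m)%:P * pc (AB (size y)) = pc (d1 * m * (AB (size y)).1, d1 * m * (AB (size y)).2).
    by rewrite /pc /= ?rmorphM /=; ring.
  move/teq_pc => [] /eqP; rewrite !mulf_eq0 (negbTE nd1) (negbTE m0) /=.
  by rewrite (negbTE (AB1_neq0 _ sy)).
- have [w [Lw sw]] := long_word m 0 ltac:(by rewrite m0) N.
  have [u [y [z [sy [L0 [L1 L2]]]]]] := HN w Lw sw.
  have [d1 [d2 [nd1 e]]] := pump_rel _ _ _ _ sy L0 L1 L2.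
  move: e; rewrite /= !mulr0.
  have -> : 'X^(size y) * pc (d1 * m, 0) = (d1 * m)%:P * 'X^((size y).+1).
    by rewrite /pc /= exprS; ring.
  move=> e; have := teq_trans (teq_sym (teq_mull (d1 * m)%:P (Xn_equiv (size y).+1))) e.
  have -> : (d1 * m)%:P * pc (AB (size y).+1) = pc (d1 * m * (AB (size y).+1).1, d1 * m * (AB (size y).+1).2).
    by rewrite /pc /= ?rmorphM /=; ring.
  move/teq_pc => [] _ /eqP; rewrite !mulf_eq0 (negbTE nd1) (negbTE m0) /=.
  rewrite (negbTE (AB1_neq0 _ sy)) orbF => /eqP q0.
  by move: hpq; rewrite q0 normr0; lia.
Qed.

End Part1.


Definition pb (P : Prop) : bool := if excluded_middle_informative P then true else false.
Lemma pbP P : reflect P (pb P).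
Proof. by rewrite /pb; case: excluded_middle_informative => h; constructor. Qed.

Definition dfa_for (P : seq int -> Prop) :=
  exists (S : finType) (s0 : S) (d : S -> int -> S) (F : pred S),
    forall w, F (foldl d s0 w) <-> P w.

Section NFA.
Variable q : int.
Variables (T : finType) (init : T -> Prop) (step : T -> int -> int -> T -> Prop) (acc : T -> Prop).

Fixpoint Run (s : T) (w u : seq int) (s' : T) : Prop :=
  match w, u with
  | [::], [::] => s = s'
  | a :: w', b :: u' => exists s1, step s a b s1 /\ Run s1 w' u' s'
  | _, _ => False
  end.

Definition NL w := exists s0 u s, init s0 /\ inSigma q u /\ Run s0 w u s /\ acc s.

Definition ndelta (X : {set T}) (a : int) : {set T} :=
  [set s' | pb (exists s, s \in X /\ exists b, `|b| < `|q| /\ step s a b s')].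

Lemma ndelta_fold w : forall X s', s' \in foldl ndelta X w <->
  exists s u, s \in X /\ inSigma q u /\ Run s w u s'.
Proof.
elim: w => [|a w IH] X s' /=.
- split; first by move=> h; exists s', [::].
  by case=> s [[|b u]] [sX [_ e]] //; rewrite -e.
- rewrite IH; split.
  + case=> s1 [u [s1X [su r]]].
    move: s1X; rewrite inE => /pbP [s [sX [b [hb st]]]].
    exists s, (b :: u); split; first exact: sX.
    split; first by rewrite /inSigma /= hb.
    by exists s1.
  + case=> s [[|b u]] [sX [su r]] //; case: r => s1 [st r].
    move: su; rewrite /inSigma /= => /andP [hb su].
    exists s1, u; split => //; rewrite inE; apply/pbP; exists s; split => //; by exists b.
Qed.

Lemma nfa_dfa : dfa_for NL.
Proof.
exists ({set T} : finType), [set s | pb (init s)], ndelta,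
  (fun X : {set T} => pb (exists s, s \in X /\ acc s)) => w.
split.
- move/pbP => [s [/ndelta_fold [s0 [u [s0i [su r]]]] ac]].
  move: s0i; rewrite inE => /pbP i0.
  by exists s0, u, s.
- case=> s0 [u [s [i0 [su [r ac]]]]].
  apply/pbP; exists s; split => //; apply/ndelta_fold; exists s0, u; split => //.
  by rewrite inE; apply/pbP.
Qed.

Lemma Run_size s w u s' : Run s w u s' -> size u = size w.
Proof.
elim: w u s => [|a w IH] [|b u] s //= [s1 [_ r]].
by rewrite (IH _ _ r).
Qed.

Lemma Run_cat s w1 u1 s1 w2 u2 s2 : Run s w1 u1 s1 -> Run s1 w2 u2 s2 ->
  Run s (w1 ++ w2) (u1 ++ u2) s2.
Proof.
elim: w1 u1 s => [|a w IH] [|b u] s //=; first by move=> ->.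
case=> s3 [st r] r2; exists s3; split => //; exact: IH r r2.
Qed.

Lemma Run_split s w1 u1 w2 u2 s2 : size u1 = size w1 ->
  Run s (w1 ++ w2) (u1 ++ u2) s2 -> exists s1, Run s w1 u1 s1 /\ Run s1 w2 u2 s2.
Proof.
elim: w1 u1 s => [|a w IH] [|b u] s //=; first by move=> _ r; exists s.
case=> su [s3 [st r]]; have [s1 [r1 r2]] := IH _ _ su r.
by exists s1; split => //; exists s3.
Qed.

End NFA.
Arguments Run {T} step s w u s'.
Arguments NL q {T} init step acc w.
Arguments nfa_dfa q {T} init step acc.
Arguments Run_size {T step s w u s'}.
Arguments Run_cat {T step s w1 u1 s1 w2 u2 s2}.
Arguments Run_split {T step s w1 u1 w2 u2 s2}.

Lemma regular_combine (q : int) (L P1 P2 : seq int -> Prop) :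
  dfa_for P1 -> dfa_for P2 -> (forall w, L w <-> inSigma q w /\ ~ P1 w /\ P2 w) ->
  regular q L.
Proof.
move=> [S1 [s1 [d1 [F1 H1]]]] [S2 [s2 [d2 [F2 H2]]]] HL.
exists ((S1 * S2)%type : finType), (s1, s2), (fun x => ~~ F1 x.1 && F2 x.2),
  (fun x a => (d1 x.1 a, d2 x.2 a)) => w.
have fl : forall x, foldl (fun x a => (d1 x.1 a, d2 x.2 a)) x w = (foldl d1 x.1 w, foldl d2 x.2 w).
  by elim: w => [|a w IH] [x1 x2] //=; rewrite IH.
rewrite HL fl /=; split.
- case=> sw [n1 p2]; split => //; apply/andP; split; last exact/H2.
  by apply/negP => /H1.
- case=> sw /andP [n1 f2]; split => //; split; last exact/H2.
  by move/H1; apply/negP.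
Qed.


Section Carry.
Variables p q : int.

Definition nextrel (c : int * int) (dl : int) (c' : int * int) :=
  c'.2 - p * c'.1 = c.1 /\ q * c'.1 = c.2 + dl.

Fixpoint CR (c : int * int) (ds : seq int) (c' : int * int) : Prop :=
  match ds with
  | [::] => c = c'
  | dl :: r => exists c1, nextrel c dl c1 /\ CR c1 r c'
  end.

Lemma CR_co c ds : CR c ds (0, 0) <->
  (c.1 + (co p q ds).1 = 0 /\ c.2 + (co p q ds).2 = 0).
Proof.
elim: ds c => [|dl r IH] [c1 c2] /=.
- split; first by case=> -> ->.
  by rewrite !addr0 => -[-> ->].
- split.
  + case=> [[e1 e2] [[n1 n2] /IH /= [h1 h2]]].
    have f1 : (co p q r).1 = - e1 by lia.
    have f2 : (co p q r).2 = - e2 by lia.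
    rewrite f1 f2; move: n1 n2 => /=; lia.
  + case=> h1 h2; exists (- (co p q r).1, - (co p q r).2); split.
    * by rewrite /nextrel /=; split; lia.
    * by apply/IH => /=; split; lia.
Qed.

Hypothesis hpq : 1 + `|p| < `|q|.
Variable M : int.
Hypothesis hM : `|p| + 2 <= M.

Definition inbox (c : int * int) := `|c.1| <= M + 2 /\ `|c.2| <= `|q| * M.

Lemma box_step c dl c' : inbox c -> `|dl| <= 2 * `|q| - 2 -> nextrel c dl c' -> inbox c'.
Proof.
case: c c' => c1 c2 [s e] [/= b1 b2] hd [/= n1 n2].
have hqs : `|q| * `|s| <= `|q| * M + 2 * `|q| - 2.
  by rewrite -normrM n2; have := ler_normD c2 dl; lia.
have hs : `|s| <= M + 1.
  rewrite leNgt; apply/negP => h.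
  have : `|q| * (M + 2) <= `|q| * `|s| by apply: ler_wpM2l => //; lia.
  lia.
have he : e = c1 + p * s by lia.
have t1 : `|e| <= `|c1| + `|p| * `|s| by rewrite he -normrM; apply: ler_normD.
have f1 : `|p| * `|s| <= `|p| * (M + 1) by apply: ler_wpM2l => //.
have f2 : (`|p| + 2) * M <= `|q| * M by apply: ler_wpM2r; lia.
split => /=; lia.
Qed.

Definition B1 : nat := absz (M + 2).
Definition B2 : nat := absz (`|q| * M).
Definition Tb := ('I_(B1.*2.+1) * 'I_(B2.*2.+1))%type.
Definition dec (t : Tb) : int * int := ((t.1 : nat)%:Z - B1%:Z, (t.2 : nat)%:Z - B2%:Z).

Lemma B1E : (B1%:Z = M + 2). Proof. rewrite /B1; lia. Qed.
Lemma B2E : (B2%:Z = `|q| * M).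
Proof. rewrite /B2 gez0_abs //; apply: mulr_ge0 => //; lia. Qed.

Lemma dec_box t : inbox (dec t).
Proof.
case: t => [[i hi] [j hj]]; rewrite /inbox /dec /= -B1E -B2E.
split; lia.
Qed.

Lemma dec_inj : injective dec.
Proof.
case=> [[i hi] [j hj]] [[i' hi'] [j' hj']]; rewrite /dec /= => -[e1 e2].
have ei : i = i' by lia.
have ej : j = j' by lia.
subst; congr pair; exact: val_inj.
Qed.

Lemma enc c : inbox c -> exists t, dec t = c.
Proof.
case: c => c1 c2 [/= b1 b2]; rewrite -B1E in b1; rewrite -B2E in b2.
have h1 : (absz (c1 + B1%:Z)%R < B1.*2.+1)%N by lia.
have h2 : (absz (c2 + B2%:Z)%R < B2.*2.+1)%N by lia.
exists (Ordinal h1, Ordinal h2); rewrite /dec /=; congr pair; lia.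
Qed.

Section Prod.
Variables (X : finType) (f : int -> int -> int) (g : X -> int -> int -> X).
Hypothesis hf : forall a b, `|a| < `|q| -> `|b| < `|q| -> `|f a b| <= 2 * `|q| - 2.

Definition pstep (s : (Tb * X)%type) (a b : int) (s' : (Tb * X)%type) :=
  nextrel (dec s.1) (f a b) (dec s'.1) /\ s'.2 = g s.2 a b.

Fixpoint gf (x : X) (w u : seq int) : X :=
  match w, u with
  | a :: w', b :: u' => gf (g x a b) w' u'
  | _, _ => x
  end.

Definition fl (w u : seq int) := [seq f x.1 x.2 | x <- zip w u].

Lemma prun_char s w u s' : inSigma q w -> inSigma q u ->
  (Run pstep s w u s' <->
   size u = size w /\ CR (dec s.1) (fl w u) (dec s'.1) /\ s'.2 = gf s.2 w u).
Proof.
elim: w u s => [|a w IH] [|b u] s //=.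
- move=> _ _; split; first by move=> ->.
  case: s s' => [t x] [t' x'] /= [_ [/dec_inj -> ->]] //.
- by move=> _ _; split => // -[].
- by move=> _ _; split => // -[].
- rewrite /inSigma /= => /andP [ha sw] /andP [hb su]; split.
  + case=> s1 [[n1 e1]] /(IH _ _ sw su) [sz [cr e2]].
    split; first by rewrite sz.
    split; last by rewrite e2 e1.
    by exists (dec s1.1).
  + case=> [[sz]] [[c1 [n1 cr]] e2].
    have [t1 dt1] := enc _ (box_step _ _ _ (dec_box _) (hf _ _ ha hb) n1).
    exists (t1, g s.2 a b); split; first by rewrite /pstep /= dt1.
    by apply/(IH _ _ sw su); split => //; rewrite /= dt1.
Qed.

End Prod.
End Carry.
Arguments gf {X} g x w u.
Arguments pstep p q M {X} f g s a b s'.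


Definition lexst (l : bool * bool) (a b : int) : bool * bool :=
  if l.1 then l else if b < a then (true, true) else if a < b then (true, false) else (false, false).

Definition gdom (x : (bool * bool * bool)%type) (a b : int) : (bool * bool * bool)%type :=
  (lexst x.1 a b, b == 0).

Lemma gf_decided y z w u : (gf gdom ((true, y), z) w u).1 = (true, y).
Proof. by elim: w u z => [|a w IH] [|b u] z //=; rewrite /gdom /lexst /= IH. Qed.

Lemma gf_lex z w u : size u = size w -> ((gf gdom ((false, false), z) w u).1 == (true, true)) = lex_lt u w.
Proof.
elim: w u z => [|a w IH] [|b u] z //= [sz].
rewrite /gdom /lexst /=.
case: (ltrP b a) => ba /=; first by rewrite gf_decided.
case: (ltrP a b) => ab /=; first by rewrite gf_decided (gt_eqF ab).
have -> : b == a by rewrite eq_le ab ba.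
by rewrite IH.
Qed.

Lemma gf_lz l z w u : size u = size w ->
  (gf gdom (l, z) w u).2 = if u is [::] then z else (last 0 u == 0).
Proof.
elim: w u l z => [|a w IH] [|b u] l z //= [sz].
rewrite IH //; case: u {IH} sz => [|c u] //=.
Qed.

Section DomNFA.
Variables p q : int.
Hypothesis hpq : 1 + `|p| < `|q|.
Let M := `|p| + 2.
Let hM : `|p| + 2 <= M. Proof. by []. Qed.

Definition fdom (a b : int) := b - a.
Lemma hfdom a b : `|a| < `|q| -> `|b| < `|q| -> `|fdom a b| <= 2 * `|q| - 2.
Proof. rewrite /fdom; lia. Qed.

Definition TD := (Tb q M * (bool * bool * bool))%type.
Definition dinit (s : TD) := dec q M s.1 = (0, 0) /\ s.2 = ((false, false), false).
Definition dacc (s : TD) := dec q M s.1 = (0, 0) /\ (s.2.1 = (true, true) \/ s.2.2 = true).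
Definition dstep := pstep p q M fdom gdom.

Definition Ndom (w : seq int) := exists u, size u = size w /\ inSigma q u /\
  co p q u = co p q w /\ (lex_lt u w \/ exists v, u = rcons v 0).

Lemma co_fl w u : size u = size w ->
  co p q (fl fdom w u) = ((co p q u).1 - (co p q w).1, (co p q u).2 - (co p q w).2).
Proof.
elim: w u => [|a w IH] [|b u] //= [] /IH ->.
all: congr pair; rewrite /= /fdom; ring.
Qed.

Lemma NLdom w : inSigma q w -> (NL q dinit dstep dacc w <-> Ndom w).
Proof.
move=> sw; split.
- case=> s0 [u [s [[i1 i2] [su [r [a1 a2]]]]]].
  move/(prun_char p q hpq M hM _ fdom gdom hfdom _ _ _ _ sw su): r => [sz [cr e]].
  exists u; split => //; split => //.
  rewrite i1 a1 in cr; move/CR_co: cr; rewrite co_fl // /= !add0r => -[h1 h2].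
  split; first by case: (co p q u) (co p q w) h1 h2 => x1 x2 [y1 y2] /= h1 h2; congr pair; lia.
  move: a2; rewrite e i2 => -[h|h].
  + by left; rewrite -(gf_lex false _ _ sz) h.
  + right; move: h; rewrite gf_lz //; case/lastP: u {su sz e h1 h2} => [|v x] //.
    have -> : (if rcons v x is [::] then false else last 0 (rcons v x) == 0) = (last 0 (rcons v x) == 0) by case: v.
    by rewrite last_rcons => /eqP ->; exists v.
- case=> u [sz [su [cu hlex]]].
  have [t0 dt0] := enc p q hpq M hM (0, 0) ltac:(by split => /=; rewrite normr0 //; lia).
  have [t1 dt1] := enc p q hpq M hM (0, 0) ltac:(by split => /=; rewrite normr0 //; lia).
  exists (t0, ((false, false), false)), u, (t1, gf gdom ((false, false), false) w u).
  split; first by split.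
  split => //; split.
  + apply/(prun_char p q hpq M hM _ fdom gdom hfdom _ _ _ _ sw su); split => //; split => //.
    rewrite /= dt0 dt1; apply/CR_co; rewrite co_fl // cu /=; lia.
  + split => //=; case: hlex => [l|[v ev]].
    * by left; apply/eqP; rewrite gf_lex.
    * by right; rewrite gf_lz // ev; case: v {ev} => [|x v] //=; rewrite ?last_rcons.
Qed.

Lemma dom_char w : inSigma q w -> (Dom p q w <-> ~ Ndom w).
Proof.
move=> sw; split.
- case=> _ H [u [sz [su [cu hlex]]]].
  case: hlex => [l|[v ev]].
  + apply: (H u su); first by rewrite /llex_lt sz eqxx l orbT.
    exact/equiv_co.
  + have sv : inSigma q v by move: su; rewrite ev /inSigma -cats1 all_cat => /andP [].
    apply: (H v sv).
    * by rewrite /llex_lt -sz ev size_rcons leqnn.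
    * apply/equiv_co; rewrite -cu ev -cats1 -[[:: 0]]/(nseq 1 0) co_pad //.
- move=> N; split => // u su lt eq.
  apply: N; move: lt; rewrite /llex_lt => /orP [lts|/andP [/eqP es lx]].
  + exists (u ++ nseq (size w - size u) 0); split.
      by rewrite size_cat size_nseq; lia.
    split.
      rewrite /inSigma all_cat; apply/andP; split; first exact: su.
      by apply/allP => x /nseqP [-> _]; rewrite normr0; lia.
    split; first by rewrite co_pad; apply/equiv_co.
    right; exists (u ++ nseq (size w - size u).-1 0).
    rewrite -cats1 -catA; congr cat.
    have : (0 < size w - size u)%N by lia.
    case: (size w - size u)%N => // n _ /=.
    by elim: n => //= n <-.
  + exists u; split => //; split => //; split; first exact/equiv_co.
    by left.
Qed.

Lemma dom_dfa : dfa_for (NL q dinit dstep dacc).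
Proof. exact: nfa_dfa. Qed.

End DomNFA.


Section K0.
Variables (S : finType) (d : S -> int -> S) (F : pred S).

Definition d0 (x : (S * bool)%type) (b : int) : (S * bool)%type :=
  (d x.1 b, (x.2 && (b == 0)) || F (d x.1 b)).

Lemma d0_fold1 u s : (foldl d0 (s, false) u).1 = foldl d s u.
Proof.
elim: u s (false) => [|b u IH] s f //=.
suff H : forall s f, (foldl d0 (s, f) u).1 = foldl d s u by rewrite H.
by elim: u {IH} => [|c u IH] s' f' //=; rewrite IH.
Qed.

Lemma d0_fold u s f : (foldl d0 (s, f) u).2 <->
  exists v n, u = v ++ nseq n 0 /\ (if v is [::] then f else F (foldl d s v)).
Proof.
elim: u s f => [|b u IH] s f /=.
- split; first by move=> h; exists [::], 0%N.
  by case=> v [n [e h]]; case: v e h => [|c v] //; case: n.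
- rewrite IH; split.
  + case=> v [n [eu hv]].
    case: v eu hv => [|c v] eu hv.
    * case/orP: hv => [/andP [hf /eqP b0]|hF].
      - by exists [::], n.+1; rewrite b0 eu.
      - by exists [:: b], n; rewrite eu.
    * by exists (b :: c :: v), n; rewrite eu.
  + case=> v [n [eu hv]].
    case: v eu hv => [|c v] /= eu hv.
    * case: n eu => // n [b0 eu].
      by exists [::], n; split => //; rewrite hv b0 eqxx.
    * case: eu => cb eu; subst c.
      exists v, n; split => //.
      by case: v {eu} hv => [|c v] // ->; rewrite orbT.
Qed.

End K0.
Arguments d0 {S} d F x b.
Arguments d0_fold {S} d F u s f.

Lemma gf_foldl (X : finType) (h : X -> int -> X) x w u : size u = size w ->
  gf (fun x (a b : int) => h x b) x w u = foldl h x u.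
Proof. by elim: w u x => [|a w IH] [|b u] x //= [] /IH ->. Qed.

Lemma inSigma_cat q u v : inSigma q (u ++ v) = inSigma q u && inSigma q v.
Proof. by rewrite /inSigma all_cat. Qed.

Section Part2.
Variables p q : int.
Hypothesis hpq : 1 + `|p| < `|q|.
Variables (z1 z2 m : int).
Hypothesis hm : 0 < m.

Definition Kl := preimage_cyc p q (m * z1, m * z2).

Variables (S : finType) (s0 : S) (F : pred S) (d : S -> int -> S).
Hypothesis HK : forall w, Kl w <-> inSigma q w /\ F (foldl d s0 w).

Let M := `|p| + 2 + m * (`|z1| + `|z2|).
Let hM : `|p| + 2 <= M.
Proof. rewrite /M; have : 0 <= m * (`|z1| + `|z2|) by apply: mulr_ge0; lia. lia. Qed.

Definition f2 (a b : int) := a - b.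
Lemma hf2 a b : `|a| < `|q| -> `|b| < `|q| -> `|f2 a b| <= 2 * `|q| - 2.
Proof. rewrite /f2; lia. Qed.

Definition g2 (x : (S * bool)%type) (a b : int) := d0 d F x b.
Definition step2 := pstep p q M f2 g2.
Definition init2 (s : (Tb q M * (S * bool))%type) :=
  (exists r, 0 <= r < m /\ dec q M s.1 = (- (r * z1), - (r * z2))) /\ s.2 = (s0, F s0).
Definition acc2 (s : (Tb q M * (S * bool))%type) :=
  exists n u s', inSigma q u /\ Run step2 s (nseq n 0) u s' /\ dec q M s'.1 = (0, 0) /\ s'.2.2.

Definition N2 w := exists r, 0 <= r < m /\ exists u, Kl u /\
  (co p q w).1 = (co p q u).1 + r * z1 /\ (co p q w).2 = (co p q u).2 + r * z2.

Lemma co_fl2 w u : size u = size w ->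
  co p q (fl f2 w u) = ((co p q w).1 - (co p q u).1, (co p q w).2 - (co p q u).2).
Proof.
elim: w u => [|a w IH] [|b u] //= [] /IH ->.
all: congr pair; rewrite /= /f2; ring.
Qed.

Lemma inSigma_zeros n : inSigma q (nseq n 0).
Proof. by apply/allP => x /nseqP [-> _]; rewrite normr0; lia. Qed.

Lemma K0_char u : (foldl (d0 d F) (s0, F s0) u).2 <->
  exists v n, u = v ++ nseq n 0 /\ F (foldl d s0 v).
Proof.
rewrite d0_fold; split => -[v [n [e h]]]; exists v, n; split => //; by case: v e h.
Qed.

Lemma NL2 w : inSigma q w -> (NL q init2 step2 acc2 w <-> N2 w).
Proof.
move=> sw; split.
- case=> st0 [u1 [st [[[r [hr dr]] i2] [su1 [r1 [n [u2 [st' [su2 [r2 [a1 a2]]]]]]]]]]].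
  have r12 := Run_cat r1 r2.
  have sw0 : inSigma q (w ++ nseq n 0) by rewrite inSigma_cat sw inSigma_zeros.
  have su12 : inSigma q (u1 ++ u2) by rewrite inSigma_cat su1 su2.
  move/(prun_char p q hpq M hM _ f2 g2 hf2 _ _ _ _ sw0 su12): r12 => [sz [cr e]].
  rewrite dr a1 in cr; move/CR_co: cr; rewrite co_fl2 // co_pad /= => -[h1 h2].
  move: a2; rewrite e i2 /g2 gf_foldl // => /K0_char [v [k [ev fv]]].
  have sv : inSigma q v by move: su12; rewrite ev inSigma_cat => /andP [].
  exists r; split => //; exists v; split; first by apply/HK.
  move: h1 h2; rewrite ev co_pad; lia.
- case=> r [hr [u [Ku [h1 h2]]]].
  have su : inSigma q u by case: Ku => -[].
  set n := (size u - size w)%N; set k := (size w - size u)%N.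
  set w' := w ++ nseq n 0; set u' := u ++ nseq k 0.
  have sw' : inSigma q w' by rewrite inSigma_cat sw inSigma_zeros.
  have su' : inSigma q u' by rewrite inSigma_cat su inSigma_zeros.
  have sz : size u' = size w' by rewrite !size_cat !size_nseq /n /k; lia.
  have bx : inbox q M (- (r * z1), - (r * z2)).
    have f1 : r * `|z1| <= m * `|z1| by apply: ler_wpM2r; lia.
    have f2 : r * `|z2| <= m * `|z2| by apply: ler_wpM2r; lia.
    have f3 : M <= `|q| * M by rewrite ler_peMl; lia.
    rewrite /inbox /= !normrN !normrM (ger0_norm (proj1 (andP hr))) /M; lia.
  have [t0 dt0] := enc p q hpq M hM _ bx.
  have [t1 dt1] := enc p q hpq M hM (0, 0) ltac:(by split => /=; rewrite normr0 //; lia).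
  have R := proj2 (prun_char p q hpq M hM _ f2 g2 hf2 (t0, (s0, F s0)) w' u'
     (t1, gf g2 (s0, F s0) w' u') sw' su').
  have R1 : Run step2 (t0, (s0, F s0)) w' u' (t1, gf g2 (s0, F s0) w' u').
    apply: R; split => //; split => //.
    rewrite /= dt0 dt1; apply/CR_co; rewrite co_fl2 // /w' /u' !co_pad /=; lia.
  have sk : size (take (size w) u') = size w by rewrite size_take; case: ifP => // /negbT; move: sz; rewrite /w' size_cat; lia.
  have R2 : Run step2 (t0, (s0, F s0)) (w ++ nseq n 0) (take (size w) u' ++ drop (size w) u')
     (t1, gf g2 (s0, F s0) w' u') by rewrite cat_take_drop.
  have [st [ra rb]] := Run_split sk R2.
  have /andP [stk sdr] : inSigma q (take (size w) u') && inSigma q (drop (size w) u').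
    by rewrite -inSigma_cat cat_take_drop.
  exists (t0, (s0, F s0)), (take (size w) u'), st; split.
    split => //; exists r; split => //.
  split; first exact: stk.
  split => //.
  exists n, (drop (size w) u'), (t1, gf g2 (s0, F s0) w' u'); split.
    exact: sdr.
  split => //; split => //=.
  rewrite /g2 gf_foldl //; apply/K0_char; exists u, k; split => //.
  by case/HK: Ku.
Qed.

Lemma N2_dfa : dfa_for (NL q init2 step2 acc2).
Proof. exact: nfa_dfa. Qed.


Lemma L_char w : preimage_cyc p q (z1, z2) w <->
  inSigma q w /\ ~ NL q (dinit p q) (dstep p q) (dacc p q) w /\ NL q init2 step2 acc2 w.
Proof.
split.
- case=> D [k /psi_co ck].
  have sw : inSigma q w by case: D.
  split => //; split; first by move/(NLdom p q hpq w sw); apply/(dom_char p q hpq w sw).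
  apply/(NL2 w sw).
  set j := (k %/ m)%Z; set r := (k %% m)%Z.
  have ek : k = j * m + r by rewrite /j /r -divz_eq.
  have hr : 0 <= r < m.
    have m0 : m != 0 by lia.
    by have := modz_ge0 k m0; have := ltz_mod k m0; rewrite gtr0_norm //; lia.
  have [u0 [su0 cu0]] := @represent p q hpq (j * (m * z1), j * (m * z2)).
  have [u [du cu]] := @dom_exists p q hpq _ su0.
  exists r; split => //; exists u; split.
    by split => //; exists j; apply/psi_co; rewrite cu cu0.
  rewrite ck cu cu0 /= ek; split; ring.
- case=> sw [nd /(NL2 w sw) [r [hr [u [[du [j /psi_co cu]] [h1 h2]]]]]].
  split; first by apply/(dom_char p q hpq w sw) => /(NLdom p q hpq w sw).
  exists (j * m + r); apply/psi_co.
  move: h1 h2; rewrite cu /=; case: (co p q w) => a b /= -> ->; congr pair; ring.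
Qed.

Lemma reg_L : regular q (preimage_cyc p q (z1, z2)).
Proof.
apply: (@regular_combine q _ (NL q (dinit p q) (dstep p q) (dacc p q)) (NL q init2 step2 acc2)).
- exact: dom_dfa.
- exact: N2_dfa.
- exact: L_char.
Qed.

End Part2.


Theorem mainTheorem6 (p q : int) (hpq : 1 + `|p| < `|q|) (hgcd : gcdz p q = 1) :
  (forall m : int, m != 0 ->
     ~ regular q (preimage_cyc p q (0, m)) /\ ~ regular q (preimage_cyc p q (m, 0)))
  /\
  (forall (zeta : int * int) (m : int), 1 < m ->
     ~ regular q (preimage_cyc p q zeta) ->
     ~ regular q (preimage_cyc p q (m * zeta.1, m * zeta.2))).
Proof.
split; first exact: part1.
move=> [z1 z2] m hm nreg [S [s0 [F [d HK]]]]; apply: nreg.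
exact: (@reg_L p q hpq z1 z2 m ltac:(lia) S s0 F d HK).
Qed.
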